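(* Let $G\subset \mathrm{SL}_3(\mathbb{C})$ be a finite subgroup, and let $\gamma$, $\gamma^*$, $\gamma_0,\dots,\gamma_l$, $B$, $B^*$, $v_m$, $P_G(t)$, $M(t)$, $M_0(t)$ be as in the context. Then: (a) for all integers $m\ge -1$ one has $v_{m+2}=Bv_{m+1}-B^*v_m+v_{m-1}$, where $v_{-1}=v_{-2}:=0$; (b) $P_G(t)$ satisfies the linear equation $\big((1-t^3)I-tB+t^2B^*\big)P_G(t)=v_0$ in $\mathbb{Z}[[t]]^{l+1}$, where $v_0=(1,0,\dots,0)^t$; (c) $\det M(t)$ is an invertible element of $\mathbb{Z}[[t]]$ and $$P_G(t)_0=\sum_{m\ge 0}\dim\big(S^m(\mathbb{C}^3)^G\big)\,t^m=\frac{\det M_0(t)}{\det M(t)}.$$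
   Context: Let $G\subset\mathrm{SL}_3(\mathbb{C})$ be a finite group, $\gamma$ its natural 3-dimensional representation on $\mathbb{C}^3$ and $\gamma^*$ the contragredient (dual) representation. Let $\gamma_0,\gamma_1,\dots,\gamma_l$ be the irreducible complex representations of $G$ up to isomorphism, with $\gamma_0$ the trivial representation. Define the $(l+1)\times(l+1)$ integer matrices $B=(b_{ij})$ and $B^*=(b^*_{ij})$ (indices $0,\dots,l$) by $\gamma_j\otimes\gamma=\bigoplus_i b_{ij}\gamma_i$ and $\gamma_j\otimes\gamma^*=\bigoplus_i b^*_{ij}\gamma_i$. For $m\ge0$ let $\rho_m$ be the representation of $G$ on the $m$-th symmetric power $S^m(\mathbb{C}^3)$ (homogeneous polynomials of degree $m$) induced by the natural action, decompose $\rho_m=\sum_{i=0}^l v_{mi}\gamma_i$, and set $v_m=(v_{m0},\dots,v_{ml})^t\in\mathbb{Z}^{l+1}$. Put $P_G(t)=\sum_{m\ge0}v_mt^m\in\mathbb{Z}[[t]]^{l+1}$ and $P_G(t)_0=\sum_{m\ge0}v_{m0}t^m$. Let $M(t)=(1-t^3)I-tB+t^2B^*$ (a matrix with entries in $\mathbb{Z}[t]$) and let $M_0(t)$ be the matrix obtained from $M(t)$ by replacing its first column (the column indexed by $\gamma_0$) with $(1,0,\dots,0)^t$. *)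

(* Defs.v *)
From HB Require Import structures.
From mathcomp Require Import all_boot all_order all_algebra all_fingroup all_solvable all_field all_character.
Set Implicit Arguments. Unset Strict Implicit. Unset Printing Implicit Defensive.
Import Order.TTheory GRing.Theory Num.Theory.
Local Open Scope ring_scope.

(* Trivariate polynomials over algC, as nested univariate polynomials:
   x_1 = X1 (outermost variable), x_2 = X2, x_3 = X3. *)
Definition P3 := {poly {poly {poly algC}}}.
Definition X1 : P3 := 'X.
Definition X2 : P3 := ('X : {poly {poly algC}})%:P.
Definition X3 : P3 := (('X : {poly algC})%:P)%:P.
Definition cst3 (c : algC) : P3 := c%:P%:P%:P.
Definition var3 (j : 'I_3) : P3 := [:: X1; X2; X3]`_j.

Definition coef3 (p : P3) (e : nat * nat * nat) : algC :=
  let: (a, b, c) := e in p`_a`_b`_c.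

(* The natural (row-vector, MathComp convention) action of A : 'M_3 on
   C[x_1,x_2,x_3]: the basis vector x_i is sent to  sum_j A i j x_j, i.e.
   row i of A; this extends multiplicatively to polynomials. *)
Definition linform (A : 'M[algC]_3) (i : 'I_3) : P3 :=
  \sum_(j < 3) cst3 (A i j) * var3 j.

Definition symimg (A : 'M[algC]_3) (e : nat * nat * nat) : P3 :=
  let: (a, b, c) := e in
  linform A 0 ^+ a * linform A 1 ^+ b * linform A 2 ^+ c.

(* The monomial basis of S^m(C^3): exponent triples (a,b,c), a+b+c = m. *)
Definition mons (m : nat) : seq (nat * nat * nat) :=
  flatten [seq [seq (a, b, (m - a - b)%N) | b <- iota 0 (m.+1 - a)%N] | a <- iota 0 m.+1].
Definition dimS (m : nat) : nat := size (mons m).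

(* The matrix of rho_m(A) on S^m(C^3) in the monomial basis (row convention:
   row r = coordinates of the image of the r-th basis monomial). *)
Definition symmx (m : nat) (A : 'M[algC]_3) : 'M[algC]_(dimS m) :=
  \matrix_(r, s) coef3 (symimg A (nth (0, 0, 0)%N (mons m) r))
                       (nth (0, 0, 0)%N (mons m) s).

Section Data.
Variables (gT : finGroupType) (G : {group gT}) (rG : mx_representation algC G 3).

(* gamma = cfRepr rG, gamma^* = its complex conjugate (contragredient). *)
Definition Bmx : 'M[algC]_(Nirr G) :=
  \matrix_(i, j) '['chi[G]_j * cfRepr rG, 'chi_i].
Definition Bsmx : 'M[algC]_(Nirr G) :=
  \matrix_(i, j) '['chi[G]_j * (cfRepr rG)^*%CF, 'chi_i].

(* multiplicity v_{m i} of gamma_i in rho_m, i.e. the character inner product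
   '[chi_{rho_m}, 'chi_i]_G written out (cf. cfdotE) *)
Definition vmult (m : nat) (i : Iirr G) : algC :=
  #|G|%:R^-1 * \sum_(x in G) \tr (symmx m (rG x)) * ('chi_i x)^*.
Definition vvec (m : nat) : 'cV[algC]_(Nirr G) := \col_i vmult m i.
Definition vvecz (m : int) : 'cV[algC]_(Nirr G) :=
  if m is Posz n then vvec n else 0.

Definition Mt : 'M[{poly algC}]_(Nirr G) :=
  \matrix_(i, j) ((i == j)%:R * (1 - 'X^3) - (Bmx i j)%:P * 'X
                  + (Bsmx i j)%:P * 'X^2).
Definition M0t : 'M[{poly algC}]_(Nirr G) :=
  \matrix_(i, j) (if j == 0 then (i == 0)%:R else Mt i j).

Definition dim_inv (m : nat) : nat :=
  \rank (\bigcap_(x in G) kermx (symmx m (rG x) - 1%:M))%MS.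
End Data.

(* Formal power series over algC are sequences nat -> algC (coefficients);
   Z[[t]] = those with all coefficients in Num.int. *)
Definition pmulS (p : {poly algC}) (f : nat -> algC) (k : nat) : algC :=
  \sum_(j < k.+1) p`_j * f (k - j)%N.
Definition pmxmulS n (M : 'M[{poly algC}]_n) (f : nat -> 'cV[algC]_n) (k : nat)
  : 'cV[algC]_n :=
  \sum_(j < k.+1) map_mx (fun p : {poly algC} => p`_j) M *m f (k - j)%N.

(* Main.v *)
Require Import Defs.
From HB Require Import structures.
From mathcomp Require Import all_boot all_order all_algebra all_fingroup all_solvable all_field all_character.
From mathcomp Require Import zify ring.
Set Implicit Arguments. Unset Strict Implicit. Unset Printing Implicit Defensive.
Import Order.TTheory GRing.Theory Num.Theory.
Local Open Scope ring_scope.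


Definition mono (e : nat * nat * nat) : P3 :=
  let: (a, b, c) := e in X1 ^+ a * X2 ^+ b * X3 ^+ c.

Lemma coef3_ext (p q : P3) :
  (forall a b c, coef3 p (a, b, c) = coef3 q (a, b, c)) -> p = q.
Proof.
move=> H; apply/polyP => a; apply/polyP => b; apply/polyP => c; exact: H.
Qed.

Lemma coef3D (p q : P3) e : coef3 (p + q) e = coef3 p e + coef3 q e.
Proof. by case: e => [[a b] c]; rewrite /coef3 !coefD. Qed.

Lemma coef3_sum I (r : seq I) (P : pred I) (F : I -> P3) e :
  coef3 (\sum_(i <- r | P i) F i) e = \sum_(i <- r | P i) coef3 (F i) e.
Proof. by case: e => [[a b] c]; rewrite /coef3 !coef_sum. Qed.

Lemma coef3C (x : algC) (p : P3) e : coef3 (cst3 x * p) e = x * coef3 p e.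
Proof. by case: e => [[a b] c]; rewrite /coef3 /cst3 !coefCM. Qed.

Lemma coef3_cst (x : algC) e : coef3 (cst3 x) e = x * (e == (0,0,0)%N)%:R.
Proof.
case: e => [[a b] c]; rewrite /coef3 /cst3.
case: a => [|a]; rewrite coefC /= ?coef0 ?mulr0 //.
case: b => [|b]; rewrite coefC /= ?coef0 ?mulr0 //.
by case: c => [|c]; rewrite coefC /= ?mulr1 ?mulr0.
Qed.

Lemma coef3_mono s t : coef3 (mono s) t = (s == t)%:R.
Proof.
case: s => [[a b] c]; case: t => [[a' b'] c'].
rewrite /mono /coef3 /X1 /X2 /X3 -!rmorphXn /= -mulrA -rmorphM /=.
rewrite coefXnM coefC.
have -> : (if (a' < a)%N then 0 else if (a' - a)%N == 0 then 'X^b * ('X^c)%:P else 0)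
   = if a == a' then 'X^b * ('X^c)%:P else 0 :> {poly {poly algC}}.
  by case: ltnP => h; case: ((a' - a)%N =P 0%N) => h2; case: (a =P a') => h3 //; lia.
rewrite [(a, b, c) == _]/eq_op /= [(a, b) == _]/eq_op /=.
case: eqP => _ /=; last by rewrite !coef0.
rewrite mulrC coefCM coefXn.
rewrite [b' == b]eq_sym; case: (b =P b') => _ /=; last by rewrite !mulr0 coef0.
by rewrite mulr1 coefXn eq_sym.
Qed.

Lemma coef3M (p q : P3) a b c :
  coef3 (p * q) (a, b, c) = \sum_(i < a.+1) \sum_(j < b.+1) \sum_(k < c.+1)
     coef3 p (i : nat, j : nat, k : nat) * coef3 q ((a - i)%N, (b - j)%N, (c - k)%N).
Proof.
rewrite /coef3 coefM !coef_sum; apply: eq_bigr => i _.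
rewrite coefM !coef_sum; apply: eq_bigr => j _; by rewrite coefM.
Qed.

Definition homog (m : nat) (p : P3) :=
  forall a b c, (a + b + c != m)%N -> coef3 p (a, b, c) = 0.

Lemma homogM m1 m2 p q : homog m1 p -> homog m2 q -> homog (m1 + m2) (p * q).
Proof.
move=> hp hq a b c h; rewrite coef3M; apply: big1 => i _; apply: big1 => j _.
apply: big1 => k _.
have [e|ne] := eqVneq (i + j + k)%N m1; last by rewrite hp ?mul0r.
rewrite hq ?mulr0 //.
have := ltn_ord i; have := ltn_ord j; have := ltn_ord k; move: h e; lia.
Qed.

Lemma homogD m p q : homog m p -> homog m q -> homog m (p + q).
Proof. by move=> hp hq a b c h; rewrite coef3D hp ?hq ?addr0. Qed.

Lemma homog0 m : homog m 0.
Proof. by move=> a b c _; rewrite /coef3 !coef0. Qed.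

Lemma homog_sum m I (r : seq I) (P : pred I) (F : I -> P3) :
  (forall i, P i -> homog m (F i)) -> homog m (\sum_(i <- r | P i) F i).
Proof.
move=> H; apply: (big_ind (homog m)); [exact: homog0|exact: homogD|exact: H].
Qed.

Lemma homog_cst x : homog 0 (cst3 x).
Proof.
move=> a b c h; rewrite coef3_cst.
by case: eqP => [[ha hb hc]|]; [move: h; rewrite ha hb hc|rewrite mulr0].
Qed.

Lemma homog_mono a b c : homog (a + b + c) (mono (a, b, c)).
Proof.
move=> a' b' c' h; rewrite coef3_mono; case: eqP => // -[ha hb hc].
by move: h; rewrite ha hb hc eqxx.
Qed.

Lemma homog_eq m m' p : m = m' -> homog m p -> homog m' p.
Proof. by move->. Qed.

Lemma homogX m p n : homog m p -> homog (m * n) (p ^+ n).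
Proof.
move=> hp; elim: n => [|n IH].
  have E : (1 : P3) = cst3 1 by rewrite /cst3 !rmorph1.
  by rewrite expr0 muln0 E; apply: homog_cst.
by rewrite exprS mulnS; apply: homogM.
Qed.

Lemma var3_mono (j : 'I_3) :
  var3 j = mono (nat_of_bool (j == 0 :> nat)%N, nat_of_bool (j == 1 :> nat)%N,
                 nat_of_bool (j == 2 :> nat)%N).
Proof.
by case: j => [[|[|[|j]]] hj] //=; rewrite /mono ?expr0 ?expr1 ?mulr1 ?mul1r.
Qed.

Lemma homog_var j : homog 1 (var3 j).
Proof.
rewrite var3_mono; eapply homog_eq; last exact: homog_mono.
by case: j => [[|[|[|j]]] hj].
Qed.

Lemma homog_linform A i : homog 1 (linform A i).
Proof.
apply: homog_sum => j _; rewrite -[1%N]/(0 + 1)%N.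
exact: homogM (homog_cst _) (homog_var _).
Qed.

Lemma homog_symimg A a b c : homog (a + b + c) (symimg A (a, b, c)).
Proof.
rewrite /symimg; apply: homogM; first apply: homogM.
all: eapply homog_eq; [|apply: homogX; exact: homog_linform]; by rewrite mul1n.
Qed.

Lemma mons_mem a b c m : ((a, b, c) \in mons m) = (a + b + c == m)%N.
Proof.
apply/allpairsPdep/eqP => [[x [y [hx hy [-> -> ->]]]]|h].
  move: hx hy; rewrite !mem_iota; lia.
exists a, b; rewrite !mem_iota; split; try lia.
congr (_, _, _); lia.
Qed.

Lemma mons_uniq m : uniq (mons m).
Proof.
apply: allpairs_uniq_dep; first exact: iota_uniq.
  by move=> x _; exact: iota_uniq.
by move=> [x1 y1] [x2 y2] _ _ /= [-> ->].
Qed.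

Lemma decomp m p : homog m p ->
  p = \sum_(s <- mons m) cst3 (coef3 p s) * mono s.
Proof.
move=> hp; apply: coef3_ext => a b c; rewrite coef3_sum.
under eq_bigr do rewrite coef3C coef3_mono.
case: (boolP ((a, b, c) \in mons m)) => H.
  rewrite (bigD1_seq (a, b, c)) ?mons_uniq //= eqxx mulr1 big1 ?addr0 //.
  by move=> s /negbTE ->; rewrite mulr0.
rewrite hp; last by rewrite -mons_mem.
rewrite big1_seq // => s /andP[_ hs]; case: eqP => [e|]; last by rewrite mulr0.
by move: H; rewrite -e hs.
Qed.

Definition c3 := ((@polyC {poly {poly algC}}) \o (@polyC {poly algC}) \o (@polyC algC)).
Lemma cst3E c : cst3 c = c3 c. Proof. by []. Qed.

Section Ev.
Variables u1 u2 u3 : P3.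
Let cf3 : commr_rmorph c3 u3. Proof. by move=> x; apply: mulrC. Qed.
Definition F1 := horner_morph cf3.
Let cf2 : commr_rmorph F1 u2. Proof. by move=> x; apply: mulrC. Qed.
Definition F2 := horner_morph cf2.
Let cf1 : commr_rmorph F2 u1. Proof. by move=> x; apply: mulrC. Qed.
Definition F3 := horner_morph cf1.

Lemma F3_cst x : F3 (cst3 x) = cst3 x.
Proof.
rewrite /F3 /cst3 (horner_morphC cf1) /= (horner_morphC cf2) /= (horner_morphC cf3).
by [].
Qed.

Lemma F3_X1 : F3 X1 = u1.
Proof. by rewrite /F3 /X1 (horner_morphX cf1). Qed.
Lemma F3_X2 : F3 X2 = u2.
Proof. by rewrite /F3 /X2 (horner_morphC cf1) /= (horner_morphX cf2). Qed.
Lemma F3_X3 : F3 X3 = u3.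
Proof. by rewrite /F3 /X3 (horner_morphC cf1) /= (horner_morphC cf2) /= (horner_morphX cf3). Qed.
End Ev.

Definition phi (A : 'M[algC]_3) : {rmorphism P3 -> P3} :=
  F3 (linform A 0) (linform A 1) (linform A 2).

Lemma phi_cst A x : phi A (cst3 x) = cst3 x.
Proof. exact: F3_cst. Qed.

Lemma phi_var A j : phi A (var3 j) = linform A j.
Proof.
case: j => [[|[|[|j]]] hj] //=; rewrite /var3 /=.
- by rewrite (_ : Ordinal hj = 0); [exact: F3_X1|apply: val_inj].
- by rewrite (_ : Ordinal hj = 1); [exact: F3_X2|apply: val_inj].
- by rewrite (_ : Ordinal hj = 2); [exact: F3_X3|apply: val_inj].
Qed.

Lemma cst3_sum I (r : seq I) (P : pred I) (F : I -> algC) :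
  cst3 (\sum_(i <- r | P i) F i) = \sum_(i <- r | P i) cst3 (F i).
Proof. by rewrite /cst3 !rmorph_sum. Qed.

Lemma cst3M x y : cst3 (x * y) = cst3 x * cst3 y.
Proof. by rewrite /cst3 !rmorphM. Qed.

Lemma phi_linform A B i : phi B (linform A i) = linform (A *m B) i.
Proof.
rewrite /linform rmorph_sum /=.
under eq_bigr do rewrite rmorphM /= phi_cst phi_var /linform mulr_sumr.
rewrite exchange_big /=; apply: eq_bigr => k _.
by rewrite mxE cst3_sum mulr_suml; apply: eq_bigr => j _; rewrite cst3M mulrA.
Qed.

Lemma phi_symimg A B e : phi B (symimg A e) = symimg (A *m B) e.
Proof. by case: e => [[a b] c]; rewrite /symimg !rmorphM !rmorphXn !phi_linform. Qed.

Lemma phi_mono B e : phi B (mono e) = symimg B e.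
Proof.
case: e => [[a b] c]; rewrite /mono /symimg !rmorphM !rmorphXn.
have -> : X1 = var3 0 by [].
have -> : X2 = var3 1 by [].
have -> : X3 = var3 2 by [].
by rewrite !phi_var.
Qed.

Lemma mons_nth_homog m (r : 'I_(dimS m)) :
  homog m (symimg (0 : 'M_3) (nth (0,0,0)%N (mons m) r)) -> True.
Proof. by []. Qed.

Lemma homog_symimg_mons A m (r : 'I_(dimS m)) :
  homog m (symimg A (nth (0,0,0)%N (mons m) r)).
Proof.
have := mem_nth (0,0,0)%N (ltn_ord r).
case: (nth _ _ _) => [[a b] c]; rewrite mons_mem => /eqP <-.
exact: homog_symimg.
Qed.

Lemma symmxM m A B : symmx m (A *m B) = symmx m A *m symmx m B.
Proof.
apply/matrixP => r s; rewrite !mxE -phi_symimg.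
rewrite {1}(decomp (homog_symimg_mons A r)) rmorph_sum coef3_sum /=.
rewrite (big_nth (0,0,0)%N) big_mkord; apply: eq_bigr => k _.
by rewrite rmorphM /= phi_cst phi_mono coef3C !mxE.
Qed.

Lemma linform1 i : linform 1%:M i = var3 i.
Proof.
rewrite /linform (bigD1 i) //= big1 ?addr0 => [|j /negbTE ji].
  by rewrite mxE eqxx /cst3 !rmorph1 mul1r.
by rewrite mxE eq_sym ji /cst3 !rmorph0 mul0r.
Qed.

Lemma symmx1 m : symmx m 1%:M = 1%:M.
Proof.
apply/matrixP => r s; rewrite !mxE.
have -> : symimg 1%:M (nth (0,0,0)%N (mons m) r) = mono (nth (0,0,0)%N (mons m) r).
  by case: (nth _ _ _) => [[a b] c]; rewrite /symimg /mono !linform1.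
by rewrite coef3_mono nth_uniq ?mons_uniq.
Qed.

Definition hf (d : 'rV[algC]_3) (e : nat * nat * nat) : algC :=
  let: (a, b, c) := e in d 0 0 ^+ a * d 0 1 ^+ b * d 0 2 ^+ c.

Lemma linform_diag d i : linform (diag_mx d) i = cst3 (d 0 i) * var3 i.
Proof.
rewrite /linform (bigD1 i) //= big1 ?addr0 => [|j /negbTE ji].
  by rewrite mxE eqxx mulr1n.
by rewrite mxE eq_sym ji mulr0n /cst3 !rmorph0 mul0r.
Qed.

Lemma symimg_diag d e : symimg (diag_mx d) e = cst3 (hf d e) * mono e.
Proof.
case: e => [[a b] c]; rewrite /symimg /mono /hf !linform_diag !exprMn !cst3M.
have -> : X1 = var3 0 by [].
have -> : X2 = var3 1 by [].
have -> : X3 = var3 2 by [].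
have E : forall x n, cst3 x ^+ n = cst3 (x ^+ n) by move=> x n; rewrite /cst3 !rmorphXn.
rewrite !E; ring.
Qed.

Lemma tr_symmx_diag m d : \tr (symmx m (diag_mx d)) = \sum_(e <- mons m) hf d e.
Proof.
rewrite /mxtrace (big_nth (0,0,0)%N) big_mkord; apply: eq_bigr => r _.
by rewrite mxE symimg_diag coef3C coef3_mono eqxx mulr1.
Qed.

Lemma tr_symmx_conj m P A : P \in unitmx ->
  \tr (symmx m (invmx P *m A *m P)) = \tr (symmx m A).
Proof.
move=> Pu; rewrite !symmxM mxtrace_mulC mulmxA -symmxM mulmxV // symmx1.
by rewrite mul1mx.
Qed.

Definition gs (y z : algC) (n : nat) := \sum_(b < n.+1) y ^+ b * z ^+ (n - b).

Lemma hsum_split d m : \sum_(e <- mons m) hf d e =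
  \sum_(a < m.+1) d 0 0 ^+ a * gs (d 0 1) (d 0 2) (m - a).
Proof.
rewrite /mons big_allpairs_dep /=.
rewrite -(big_mkord xpredT (fun a => d 0 0 ^+ a * gs (d 0 1) (d 0 2) (m - a))).
rewrite /index_iota subn0 big_seq [RHS]big_seq.
apply: eq_bigr => a; rewrite inE mem_iota => ha.
rewrite /gs mulr_sumr.
rewrite -(big_mkord xpredT (fun b => d 0 0 ^+ a * (d 0 1 ^+ b * d 0 2 ^+ (m - a - b)))).
rewrite /index_iota subn0.
have -> : (m.+1 - a = (m - a).+1)%N by lia.
by apply: eq_bigr => b _; rewrite /hf mulrA.
Qed.

Lemma gsS y z n : gs y z n.+1 = z ^+ n.+1 + y * gs y z n.
Proof.
rewrite /gs big_ord_recl subn0 expr0 mul1r; congr (_ + _).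
rewrite mulr_sumr; apply: eq_bigr => b _; rewrite /bump /= exprS mulrA; congr (_ * _ ^+ _); lia.
Qed.

Lemma gs0 y z : gs y z 0 = 1.
Proof. by rewrite /gs big_ord1 !expr0 mulr1. Qed.

Definition hs d m := \sum_(e <- mons m) hf d e.

Lemma hsS d m : hs d m.+1 = gs (d 0 1) (d 0 2) m.+1 + d 0 0 * hs d m.
Proof.
rewrite /hs !hsum_split big_ord_recl subn0 expr0 mul1r; congr (_ + _).
rewrite mulr_sumr; apply: eq_bigr => a _; rewrite /bump /= exprS mulrA; congr (_ * gs _ _ _); lia.
Qed.

Lemma hs0 d : hs d 0 = 1.
Proof. by rewrite /hs hsum_split big_ord1 expr0 mul1r gs0. Qed.

Definition e1 (d : 'rV[algC]_3) := d 0 0 + d 0 1 + d 0 2.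
Definition e2 (d : 'rV[algC]_3) := d 0 0 * d 0 1 + d 0 1 * d 0 2 + d 0 0 * d 0 2.
Definition e3 (d : 'rV[algC]_3) := d 0 0 * d 0 1 * d 0 2.

Lemma hs1 d : hs d 1 = e1 d.
Proof. rewrite hsS hs0 gsS gs0 /e1; ring. Qed.
Lemma hs2 d : hs d 2 = e1 d * hs d 1 - e2 d * hs d 0.
Proof. rewrite hs1 hs0 hsS hs1 gsS gsS gs0 /e1 /e2; ring. Qed.
Lemma hs_rec d n : hs d n.+3 = e1 d * hs d n.+2 - e2 d * hs d n.+1 + e3 d * hs d n.
Proof.
rewrite hsS gsS hsS gsS hsS /e1 /e2 /e3 !exprS; ring.
Qed.


Lemma tr_idem n (E : 'M[algC]_n) : E *m E = E -> \tr E = (\rank E)%:R.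
Proof.
move=> EE; set Bm := row_base E.
have sEB : (E <= Bm)%MS by rewrite (eq_row_base E).
have sBE : (Bm <= E)%MS by rewrite (eq_row_base E).
set C := E *m pinvmx Bm.
have EC : E = C *m Bm by rewrite /C mulmxKpV.
have BE : Bm *m E = Bm.
  by case/submxP: sBE => D DE; rewrite {1}DE -mulmxA EE -DE.
have BC : Bm *m C = 1%:M.
  apply: (row_free_inj (row_base_free E)); rewrite /= mul1mx -mulmxA -EC.
  exact: BE.
by rewrite {1}EC mxtrace_mulC BC mxtrace1.
Qed.

Lemma diag_pow (A : 'M[algC]_3) n : (0 < n)%N -> A ^+ n = 1 ->
  exists P, exists d : 'rV[algC]_3, P \in unitmx /\ A = invmx P *m diag_mx d *m P.
Proof.
move=> n0 An.
have [z prim_z] := C_prim_root_exists n0.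
have : diagonalizable A.
  apply/diagonalizableP; exists [seq z ^+ i | i <- index_iota 0 n].
    rewrite map_inj_in_uniq ?iota_uniq // => i j.
    rewrite !mem_index_iota => ltin ltjn /eqP.
    by rewrite (eq_prim_root_expr prim_z) !modn_small // => /eqP.
  rewrite big_map factor_Xn_sub_1 //; apply: mxminpoly_min.
  by rewrite rmorphB rmorphXn /= horner_mx_X rmorph1 An subrr.
case=> P Pu /(diagonalizable_forLR Pu) [d ->].
by exists P, d; split => //; rewrite mxpoly.conjVmx.
Qed.

Lemma sum3 (F : 'I_3 -> algC) : \sum_i F i = F 0 + F 1 + F 2.
Proof.
rewrite !big_ord_recl big_ord0 addr0 addrA.
by congr (_ + F _ + F _); apply: val_inj.
Qed.

Lemma prod3 (F : 'I_3 -> algC) : \prod_i F i = F 0 * F 1 * F 2.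
Proof.
rewrite !big_ord_recl big_ord0 mulr1 mulrA.
by congr (_ * F _ * F _); apply: val_inj.
Qed.

Lemma tr_conj n P (M : 'M[algC]_n) : P \in unitmx -> \tr (invmx P *m M *m P) = \tr M.
Proof. by move=> Pu; rewrite mxtrace_mulC mulmxA mulmxV // mul1mx. Qed.

Section Grp.
Variables (gT : finGroupType) (G : {group gT}) (rG : mx_representation algC G 3).
Hypothesis detG : forall x, x \in G -> \det (rG x) = 1.

Lemma eigen x : x \in G -> exists d : 'rV[algC]_3,
  [/\ forall m, \tr (symmx m (rG x)) = hs d m, cfRepr rG x = e1 d,
      (cfRepr rG)^*%CF x = e2 d & e3 d = 1].
Proof.
move=> Gx.
have An : rG x ^+ #|G| = 1 by rewrite -repr_mxX // expg_cardG // repr_mx1.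
have [P [d [Pu Ad]]] := diag_pow (cardG_gt0 G) An.
have dP0 : \det P != 0 by rewrite -unitfE -unitmxE.
have dD : \prod_i d 0 i = 1.
  have := detG Gx; rewrite Ad !det_mulmx det_inv [_ * \det P]mulrC mulrA mulfV //.
  by rewrite mul1r det_diag.
have e3d : e3 d = 1 by rewrite -dD prod3.
have dnz j : d 0 j != 0.
  apply: contraTneq isT => dj; move: dD; rewrite (bigD1 j) //= dj mul0r => h; have := oner_neq0 algC; by rewrite h eqxx.
exists d; split => //.
- by move=> m; rewrite Ad tr_symmx_conj // tr_symmx_diag.
- by rewrite cfunE Gx mulr1n Ad tr_conj // mxtrace_diag sum3.
rewrite cfConjCE -char_inv ?cfRepr_char // cfunE groupV Gx mulr1n repr_mxV //.
set D' := diag_mx (\row_j (d 0 j)^-1).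
have DD' : diag_mx d *m D' = 1%:M.
  rewrite mulmx_diag -diag_const_mx; congr diag_mx; apply/rowP => j.
  by rewrite !mxE mulfV.
have AX : rG x *m (invmx P *m D' *m P) = 1%:M.
  rewrite Ad !mulmxA -[_ *m P *m invmx P]mulmxA mulmxV // mulmx1.
  by rewrite -[_ *m diag_mx d *m D']mulmxA DD' mulmx1 mulVmx.
have -> : invmx (rG x) = invmx P *m D' *m P.
  by rewrite -[invmx (rG x)]mulmx1 -AX mulmxA mulVmx ?mul1mx // repr_mx_unit.
rewrite tr_conj // mxtrace_diag sum3 !mxE.
have i0 : (d 0 0)^-1 = d 0 1 * d 0 2.
  by rewrite -[LHS]mulr1 -e3d /e3 -!mulrA mulKf.
have i1 : (d 0 1)^-1 = d 0 0 * d 0 2.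
  have E : e3 d = d 0 1 * (d 0 0 * d 0 2) by rewrite /e3; ring.
  by rewrite -[LHS]mulr1 -e3d E mulKf.
have i2 : (d 0 2)^-1 = d 0 0 * d 0 1.
  have E : e3 d = d 0 2 * (d 0 0 * d 0 1) by rewrite /e3; ring.
  by rewrite -[LHS]mulr1 -e3d E mulKf.
rewrite i0 i1 i2 /e2; ring.
Qed.

Fact rS_repr m : mx_repr G (fun x => symmx m (rG x)).
Proof.
split; first by rewrite repr_mx1 symmx1.
by move=> x y Gx Gy; rewrite /= repr_mxM // symmxM.
Qed.
Definition rS m := MxRepresentation (rS_repr m).
Definition chi m := cfRepr (rS m).

Lemma chiE m x : x \in G -> chi m x = \tr (symmx m (rG x)).
Proof. by move=> Gx; rewrite cfunE Gx mulr1n. Qed.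

Lemma vmultE m i : vmult rG m i = '[chi m, 'chi_i].
Proof.
rewrite cfdotE /vmult; congr (_ * _); apply: eq_bigr => x Gx; by rewrite chiE.
Qed.

Let gam := cfRepr rG.

Lemma chi0 : chi 0 = 1.
Proof.
apply/cfun_inP => x Gx; rewrite chiE // cfun1E Gx.
by have [d [-> _ _ _]] := eigen Gx; rewrite hs0.
Qed.

Lemma chi1 : chi 1 = gam.
Proof.
apply/cfun_inP => x Gx; rewrite chiE //.
by have [d [-> -> _ _]] := eigen Gx; rewrite hs1.
Qed.

Lemma chi2 : chi 2 = chi 1 * gam - chi 0 * gam^*%CF.
Proof.
apply/cfun_inP => x Gx; rewrite !cfunE Gx !mulr1n /=.
have [d [h1 h2 h3 _]] := eigen Gx; move: h2 h3.
rewrite cfConjCE !cfunE Gx !mulr1n => h2 h3.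
by rewrite !h1 h3 h2 hs2; ring.
Qed.

Lemma chi_rec n : chi n.+3 = chi n.+2 * gam - chi n.+1 * gam^*%CF + chi n.
Proof.
apply/cfun_inP => x Gx; rewrite !cfunE Gx !mulr1n /=.
have [d [h1 h2 h3 e3d]] := eigen Gx; move: h2 h3.
rewrite cfConjCE !cfunE Gx !mulr1n => h2 h3.
by rewrite !h1 h3 h2 hs_rec e3d; ring.
Qed.
End Grp.


Lemma zm2 (V : zmodType) (a b : V) : a - b - a + b = 0.
Proof. by rewrite [a - b - a]addrAC subrr sub0r addNr. Qed.
Lemma zm3 (V : zmodType) (a b c : V) : a - b + c - a + b - c = 0.
Proof.
rewrite [a - b + c - a]addrAC [a - b - a]addrAC subrr sub0r.
by rewrite [- b + c + b]addrAC addNr add0r subrr.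
Qed.

Section Vec.
Variables (gT : finGroupType) (G : {group gT}) (rG : mx_representation algC G 3).
Hypothesis detG : forall x, x \in G -> \det (rG x) = 1.

Lemma mulB (psi phi : 'CF(G)) :
  (\matrix_(i, j) '['chi[G]_j * psi, 'chi_i]) *m (\col_i '[phi, 'chi_i])
  = \col_i '[phi * psi, 'chi_i].
Proof.
apply/matrixP => i k; rewrite !mxE.
rewrite {2}(cfun_sum_cfdot phi) mulr_suml cfdot_suml.
by apply: eq_bigr => j _; rewrite !mxE -scalerAl cfdotZl mulrC.
Qed.

Lemma vvecE m : vvec rG m = \col_i '[chi rG m, 'chi_i].
Proof. by apply/matrixP => i k; rewrite !mxE vmultE. Qed.

Lemma colD (a b : 'CF(G)) :
  \col_i '[a + b, 'chi_i] = \col_i '[a, 'chi_i] + \col_i '[b, 'chi_i] :> 'cV_(Nirr G).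
Proof. by apply/matrixP => i k; rewrite !mxE cfdotDl. Qed.
Lemma colB (a b : 'CF(G)) :
  \col_i '[a - b, 'chi_i] = \col_i '[a, 'chi_i] - \col_i '[b, 'chi_i] :> 'cV_(Nirr G).
Proof. by apply/matrixP => i k; rewrite !mxE cfdotBl. Qed.

Lemma Bv m : Bmx rG *m vvec rG m = \col_i '[chi rG m * cfRepr rG, 'chi_i].
Proof. by rewrite vvecE mulB. Qed.
Lemma Bsv m : Bsmx rG *m vvec rG m = \col_i '[chi rG m * (cfRepr rG)^*%CF, 'chi_i].
Proof. by rewrite vvecE mulB. Qed.

Lemma v1 : vvec rG 1 = Bmx rG *m vvec rG 0.
Proof. by rewrite Bv vvecE (chi0 detG) (chi1 detG) mul1r. Qed.

Lemma v2 : vvec rG 2 = Bmx rG *m vvec rG 1 - Bsmx rG *m vvec rG 0.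
Proof. by rewrite Bv Bsv vvecE (chi2 detG) colB. Qed.

Lemma vrec n : vvec rG n.+3 =
  Bmx rG *m vvec rG n.+2 - Bsmx rG *m vvec rG n.+1 + vvec rG n.
Proof. by rewrite Bv Bsv [vvec rG n]vvecE vvecE (chi_rec detG) colD colB. Qed.

Lemma partA (m : int) : (-1 <= m)%R ->
     vvecz rG (m + 2) =
       Bmx rG *m vvecz rG (m + 1) - Bsmx rG *m vvecz rG m + vvecz rG (m - 1).
Proof.
case: m => [n|n] h; last first.
  case: n h => [|n] h; last by exfalso; move: h; lia.
  have -> : (Negz 0 + 2 = 1%:Z)%R by [].
  have -> : (Negz 0 + 1 = 0%:Z)%R by [].
  by rewrite /vvecz /= mulmx0 subr0 addr0 v1.
have -> : (n%:Z + 2 = n.+2%:Z)%R by lia.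
have -> : (n%:Z + 1 = n.+1%:Z)%R by lia.
case: n h => [|n] h.
  by rewrite /vvecz /= addr0 v2.
have -> : (n.+1%:Z - 1 = n%:Z)%R by lia.
by rewrite /vvecz vrec.
Qed.

Lemma v0E : vvec rG 0 = \col_(i < Nirr G) (i == 0)%:R.
Proof.
rewrite vvecE (chi0 detG); apply/matrixP => i k; rewrite !mxE -irr0 cfdot_irr.
by rewrite eq_sym.
Qed.

Lemma Mt_coef j : map_mx (fun p : {poly algC} => p`_j) (Mt rG) =
  (j == 0%N)%:R *: 1%:M - (j == 1%N)%:R *: Bmx rG + (j == 2%N)%:R *: Bsmx rG
  - (j == 3%N)%:R *: 1%:M.
Proof.
apply/matrixP => i k; rewrite !mxE.
rewrite coefD coefB -polyC_natr !coefCM coefB coef1 coefX !coefXn; ring.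
Qed.

Lemma sum_ind N n c (F : nat -> 'cV[algC]_N) :
  \sum_(j < n) ((j == c :> nat)%:R *: F j) = if (c < n)%N then F c else 0.
Proof.
case: ltnP => h.
  rewrite (bigD1 (Ordinal h)) //= eqxx scale1r big1 ?addr0 // => j hj.
  have /negbTE -> : (j != c :> nat) by apply: contra hj => /eqP e; apply/eqP/val_inj.
  by rewrite scale0r.
apply: big1 => j _; have /negbTE -> : (j != c :> nat).
  by apply/eqP => e; move: (ltn_ord j); rewrite e; lia.
by rewrite scale0r.
Qed.

Lemma partB k : pmxmulS (Mt rG) (vvec rG) k = (if k == 0%N then vvec rG 0 else 0).
Proof.
rewrite /pmxmulS.
under eq_bigr do rewrite Mt_coef !mulmxDl !mulNmx -!scalemxAl !mul1mx.
rewrite !big_split /= !sumrN.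
rewrite (sum_ind _ _ (fun j => vvec rG (k - j))).
rewrite (sum_ind _ _ (fun j => Bmx rG *m vvec rG (k - j))).
rewrite (sum_ind _ _ (fun j => Bsmx rG *m vvec rG (k - j))).
rewrite (sum_ind _ _ (fun j => vvec rG (k - j))).
case: k => [|[|[|n]]] /=.
- by rewrite !subr0 !addr0.
- by rewrite !subr0 !addr0 v1 subrr.
- by rewrite !subSS !subn0 subr0 v2 zm2.
- by rewrite !subSS !subn0 vrec zm3.
Qed.
End Vec.


Section Det.
Variables (gT : finGroupType) (G : {group gT}) (rG : mx_representation algC G 3).

Lemma nat_int (x : algC) : x \in Num.nat -> x \in Num.int.
Proof. by move=> h; rewrite intrE h. Qed.

Lemma B_int i j : Bmx rG i j \in Num.int.
Proof.
rewrite mxE; apply/nat_int/Cnat_cfdot_char; last exact: irr_char.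
by rewrite rpredM ?irr_char ?cfRepr_char.
Qed.

Lemma Bs_int i j : Bsmx rG i j \in Num.int.
Proof.
rewrite mxE; apply/nat_int/Cnat_cfdot_char; last exact: irr_char.
by rewrite rpredM ?irr_char ?cfConjC_char ?cfRepr_char.
Qed.

Lemma Mt_int i j : Mt rG i j \is a polyOver Num.int_num_subdef.
Proof.
rewrite mxE; rewrite !(rpredB, rpredD, rpredM) ?polyOverX ?polyOverXn ?rpred1 ?rpred_nat //.
- by rewrite polyOverC B_int.
- by rewrite polyOverC Bs_int.
Qed.

Lemma det_int : \det (Mt rG) \is a polyOver Num.int_num_subdef.
Proof.
rewrite /determinant; apply: rpred_sum => s _.
rewrite rpredM ?rpredX ?rpredN ?rpred1 //; apply: rpred_prod => i _.
exact: Mt_int.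
Qed.

Lemma det_coef0 : (\det (Mt rG))`_0 = 1.
Proof.
rewrite -horner_coef0 -[_.[0]]/(horner_eval 0 _) -det_map_mx.
have -> : map_mx (horner_eval 0) (Mt rG) = 1%:M.
  have E := Mt_coef rG 0; rewrite /= scale1r !scale0r subr0 addr0 subr0 in E.
  rewrite -E; apply/matrixP => i j; rewrite !mxE /=.
  by rewrite /horner_eval horner_coef0.
by rewrite det1.
Qed.
End Det.

Section Inv.
Variable d : {poly algC}.
Hypothesis d0 : d`_0 = 1.
Hypothesis dint : d \is a polyOver Num.int_num_subdef.

Definition uu := 1 - d.
Definition QQ N := \sum_(i < N.+1) uu ^+ i.
Definition qf k := (QQ k)`_k.

Lemma uu0 : uu`_0 = 0.
Proof. by rewrite /uu coefB coef1 d0 subrr. Qed.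

Lemma uX_coef i l : (l < i)%N -> (uu ^+ i)`_l = 0.
Proof.
elim: i l => [//|i IH] l h; rewrite exprS coefM; apply: big1 => j _.
case: (nat_of_ord j) (ltn_ord j) => [|j'] hj; first by rewrite uu0 mul0r.
by rewrite IH ?mulr0 //; lia.
Qed.

Lemma Q_stable N l : (l <= N)%N -> (QQ N)`_l = (QQ l)`_l.
Proof.
move=> h; have [k ->] : exists k, N = (l + k)%N by exists (N - l)%N; lia.
elim: k => [|k IH]; first by rewrite addn0.
by rewrite addnS /QQ big_ord_recr /= coefD -IH uX_coef ?addr0 //; lia.
Qed.

Lemma dQ N : d * QQ N = 1 - uu ^+ N.+1.
Proof.
elim: N => [|N IH]; first by rewrite /QQ big_ord1 expr0 mulr1 expr1 /uu; ring.
rewrite /QQ big_ord_recr /= mulrDr -/(QQ N) IH [uu ^+ N.+2]exprS /uu; ring.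
Qed.

Lemma pmulS_Q p N k : (k <= N)%N -> pmulS p qf k = (p * QQ N)`_k.
Proof.
move=> h; rewrite /pmulS coefM; apply: eq_bigr => j _.
by rewrite /qf Q_stable //; lia.
Qed.

Lemma q_int k : qf k \in Num.int.
Proof.
have : QQ k \is a polyOver Num.int_num_subdef.
  by apply: rpred_sum => i _; rewrite rpredX // rpredB // rpred1.
by move/polyOverP => h; exact: h.
Qed.

Lemma q_inv k : pmulS d qf k = (k == 0%N)%:R.
Proof. by rewrite (pmulS_Q d (leqnn k)) dQ coefB coef1 uX_coef ?subr0. Qed.
End Inv.

Definition eqN N (a b : {poly algC}) := forall k, (k <= N)%N -> a`_k = b`_k.

Lemma eqN_mull N c a b : eqN N a b -> eqN N (c * a) (c * b).
Proof.
move=> h k hk; rewrite !coefM; apply: eq_bigr => j _; rewrite h //; lia.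
Qed.

Lemma eqN_mulr N c a b : eqN N a b -> eqN N (a * c) (b * c).
Proof. by move=> h; rewrite ![_ * c]mulrC; apply: eqN_mull. Qed.

Lemma eqNk N a b k : eqN N a b -> (k <= N)%N -> a`_k = b`_k.
Proof. by move=> h; apply: h. Qed.
Arguments eqNk [N a b k].

Lemma eqN_sym N a b : eqN N a b -> eqN N b a.
Proof. by move=> h k hk; rewrite h. Qed.

Section Cramer.
Variables (gT : finGroupType) (G : {group gT}) (rG : mx_representation algC G 3).
Hypothesis detG : forall x, x \in G -> \det (rG x) = 1.

Definition Pv N : 'cV[{poly algC}]_(Nirr G) := \col_i \poly_(k < N.+1) vmult rG k i.

Lemma MPv N i k : (k <= N)%N ->
  ((Mt rG *m Pv N) i 0)`_k = ((k == 0%N) && (i == 0))%:R.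
Proof.
move=> hk.
have := congr1 (fun M : 'cV_(Nirr G) => M i 0) (partB detG k).
rewrite /pmxmulS summxE => E.
rewrite mxE coef_sum.
under eq_bigr do rewrite mxE coefM.
rewrite exchange_big /=.
transitivity (\sum_(j < k.+1) ((Mt rG ^ (fun p : {poly algC} => p`_j))%sesqui *m vvec rG (k - j)) i 0).
  apply: eq_bigr => j _; rewrite mxE; apply: eq_bigr => l _.
  by rewrite !mxE coef_poly; case: ltnP => //; lia.
rewrite E; case: eqP => _ /=; last by rewrite (@mxE _ _ _ (fun _ _ => 0)) || (rewrite /GRing.zero /=; rewrite mxE).
rewrite (v0E detG); exact: mxE.
Qed.

Lemma detM0 : \det (M0t rG) = cofactor (Mt rG) 0 0.
Proof.
rewrite (expand_det_col _ 0) (bigD1 0) //= big1 ?addr0 => [|i /negbTE i0].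
  have h00 : M0t rG 0 0 = 1.
    by rewrite mxE /=.
  rewrite h00 mul1r /cofactor.
  congr (_ * \det _); apply/matrixP => i j; rewrite !mxE.
  by case: eqP => // /eqP; rewrite (negbTE (neq_lift _ _)).
by rewrite mxE eqxx i0 mul0r.
Qed.

Lemma cramer N : eqN N (\det (Mt rG) * (Pv N) 0 0) (\det (M0t rG)).
Proof.
move=> k hk.
have E : (\det (Mt rG))%:M *m Pv N = \adj (Mt rG) *m (Mt rG *m Pv N).
  by rewrite mulmxA mul_adj_mx.
have := congr1 (fun M : 'cV[{poly algC}]_(Nirr G) => (M 0 0)`_k) E.
rewrite mul_scalar_mx mxE /= => ->.
rewrite mxE coef_sum.
transitivity (\sum_i (\adj (Mt rG) 0 i * (i == 0)%:R)`_k).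
  apply: eq_bigr => i _; apply: eqN_mull hk => l hl.
  by rewrite MPv // -mulr_natl coefMn coef1 mulr1; case: (l == 0%N); case: (i == 0).
have -> : \sum_i (\adj (Mt rG) 0 i * (i == 0)%:R)`_k =
          (\sum_i (\adj (Mt rG) 0 i * (i == 0)%:R))`_k by rewrite coef_sum.
rewrite (bigD1 0) //= big1 ?addr0 => [|i /negbTE ->]; last by rewrite mulr0.
by rewrite mulr1 detM0 mxE.
Qed.

Lemma partC m : vmult rG m 0 = pmulS (\det (M0t rG)) (qf (\det (Mt rG))) m.
Proof.
have h0 := det_coef0 rG; have hi := det_int rG.
rewrite (pmulS_Q h0 hi (\det (M0t rG)) (leqnn m)) mulrC.
rewrite (eqNk (eqN_mull (QQ (\det (Mt rG)) m) (eqN_sym (@cramer m))) (leqnn m)).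
rewrite mulrA [_ * \det _]mulrC dQ.
have h : eqN m (1 - uu (\det (Mt rG)) ^+ m.+1) 1.
  move=> l hl; rewrite coefB (uX_coef h0 hi) ?subr0 //; lia.
rewrite (eqNk (eqN_mulr (Pv m 0 0) h) (leqnn m)) mul1r mxE coef_poly ltnSn.
by [].
Qed.
End Cramer.


Section Fix.
Variables (gT : finGroupType) (G : {group gT}) (n : nat).
Variable (rH : mx_representation algC G n).

Let E := #|G|%:R^-1 *: \sum_(x in G) rH x.

Let fixM m (M : 'M[algC]_(m, n)) :
  (forall x, x \in G -> M *m rH x = M) -> M *m E = M.
Proof.
move=> h; rewrite /E -scalemxAr mulmx_sumr (eq_bigr (fun _ => M)) => [|x Gx]; last exact: h.
by rewrite sumr_const -scaler_nat scalerA mulVf ?neq0CG // scale1r.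
Qed.

Let EE y : y \in G -> E *m rH y = E.
Proof.
move=> Gy; rewrite /E -scalemxAl mulmx_suml; congr (_ *: _).
rewrite (eq_bigr (fun x => rH (x * y)%g)) => [|x Gx]; last by rewrite repr_mxM.
rewrite [RHS](reindex_inj (mulIg y)) /=; apply: eq_bigl => x.
by rewrite groupMr.
Qed.

Lemma rank_fix : #|G|%:R^-1 * \sum_(x in G) \tr (rH x) = (\rank (rfix_mx rH G))%:R.
Proof.
have Efix : (E <= rfix_mx rH G)%MS by apply/rfix_mxP => x Gx; exact: EE.
have sFE : (rfix_mx rH G <= E)%MS.
  by rewrite -[X in (X <= _)%MS](fixM (@rfix_mx_id _ _ _ _ rH G)) submxMl.
have -> : \rank (rfix_mx rH G) = \rank E by apply/eqmx_rank/andP.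
rewrite -tr_idem; last exact: fixM.
by rewrite /E mxtraceZ raddf_sum.
Qed.
End Fix.

Unset Implicit Arguments.
Theorem theorem2 (gT : finGroupType) (G : {group gT})
    (rG : mx_representation algC G 3)
    (faithful : mx_faithful rG)
    (detG : forall x, x \in G -> \det (rG x) = 1) :
  (* (a) *)
  (forall m : int, (-1 <= m)%R ->
     vvecz rG (m + 2) =
       Bmx rG *m vvecz rG (m + 1) - Bsmx rG *m vvecz rG m + vvecz rG (m - 1))
  /\
  (* (b) *)
  (vvec rG 0 = \col_(i < Nirr G) (i == 0)%:R /\
   forall k : nat,
     pmxmulS (Mt rG) (vvec rG) k = (if k == 0%N then vvec rG 0 else 0))
  /\
  (* (c) *)
  ((forall k, (\det (Mt rG))`_k \in Num.int) /\
   exists q : nat -> algC,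
     (forall k, q k \in Num.int) /\
     (forall k, pmulS (\det (Mt rG)) q k = (k == 0%N)%:R) /\
     (forall m, vmult rG m 0 = (dim_inv rG m)%:R) /\
     (forall m, vmult rG m 0 = pmulS (\det (M0t rG)) q m)).
Proof.
have h0 := det_coef0 rG; have hi := det_int rG.
split; first by move=> m hm; apply: partA.
split; first by split; [exact: v0E | move=> k; exact: partB].
split; first by move=> k; move/polyOverP: hi => h; exact: h.
exists (qf (\det (Mt rG))).
split; first by move=> k; exact: q_int.
split; first by move=> k; exact: q_inv.
split; last by move=> m; exact: partC.
move=> m; rewrite /vmult.
have -> : dim_inv rG m = \rank (rfix_mx (rS rG m) G).
  rewrite /dim_inv; apply/eqmx_rank/andP; split.
    apply/rfix_mxP => x Gx.
    have : (\bigcap_(y in G) kermx (symmx m (rG y) - 1%:M) <= kermx (symmx m (rG x) - 1%:M))%MS.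
      by apply: (bigcapmx_inf x).
    by move/sub_kermxP; rewrite mulmxBr mulmx1 => /eqP; rewrite subr_eq0 => /eqP.
  apply/sub_bigcapmxP => x Gx; apply/sub_kermxP.
  by rewrite mulmxBr mulmx1 (@rfix_mx_id _ _ _ _ (rS rG m) G x Gx) subrr.
rewrite -(rank_fix (rS rG m)).
congr (_ * _); apply: eq_bigr => x Gx.
by rewrite irr0 cfun1E Gx conjC1 mulr1.
Qed.
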